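(* Let $q$ be a symmetric unimodal probability density on $\mathbb{R}$ with $h_q:=-\int_{\mathbb{R}} q(x)\log q(x)\,dx$ finite, and let $0<d_{\min}\le d_{\max}$ be constants. Let $X$ be a real random variable with probability density $p$ satisfying $$\frac{q(x)}{d_{\max}}\le p(x)\le \frac{q(x)}{d_{\min}}\quad\text{for all }x\in\mathbb{R}.$$ Then the differential entropy $h(X)=-\int p\log p$ satisfies $$h(X)\ \ge\ \frac{h_q}{d_{\max}}+\log d_{\min}-\left(\frac{1}{d_{\min}}-\frac{1}{d_{\max}}\right)\big[q(0)\log q(0)\big]^+,$$ $$h(X)\ \le\ \frac{h_q}{d_{\min}}+\log d_{\max}+\left(\frac{1}{d_{\min}}-\frac{1}{d_{\max}}\right)\big[q(0)\log q(0)\big]^+.$$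
   Context: Natural logarithms are used, and $[x]^+=\max(0,x)$. A probability density is symmetric unimodal if it satisfies $q(x)=q(-x)$ for all $x$ and is non-increasing on $[0,\infty)$. In the intended application $p(x)=q(x)/d(x)$ on $[-A/2,A/2)$ with $d_{\min}=1-\frac{A}{M}q(0)$ and $d_{\max}=1+\frac{A}{M}q(0)$ (assumed positive), so both bounds tend to $h_q$ as $M\to\infty$. *)

(* Defs.v *)
From HB Require Import structures.
From mathcomp Require Import all_boot all_order all_algebra.
From mathcomp Require Import all_classical all_reals all_analysis.
Set Implicit Arguments. Unset Strict Implicit. Unset Printing Implicit Defensive.
Import Order.TTheory GRing.Theory Num.Theory.
Import numFieldNormedType.Exports.
Local Open Scope classical_set_scope.
Local Open Scope ring_scope.

Definition is_density (R : realType) (f : R -> R) : Prop :=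
  measurable_fun setT f /\ (forall x, 0 <= f x) /\
  (\int[@lebesgue_measure R]_x (f x)%:E = 1)%E.

Definition symmetric_unimodal (R : realType) (f : R -> R) : Prop :=
  (forall x, f x = f (- x)) /\ (forall x y, 0 <= x -> x <= y -> f y <= f x).

(* differential entropy -\int f ln f (natural log; ln 0 = 0 in mathcomp, so
   the convention 0 ln 0 = 0 holds), as an extended real. *)
Definition diff_entropy (R : realType) (f : R -> R) : \bar R :=
  (- \int[@lebesgue_measure R]_x (f x * ln (f x))%:E)%E.

Definition has_density (R : realType) (d : measure_display) (T : measurableType d)
  (P : probability T R) (X : {RV P >-> R}) (p : R -> R) : Prop :=
  (forall x, 0 <= p x) /\ measurable_fun setT p /\
  forall A : set R, measurable A ->
    distribution P X A = (\int[@lebesgue_measure R]_(x in A) (p x)%:E)%E.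

Definition pos_part (R : realType) (x : R) : R := Num.max 0 x.

(* Main.v *)
Require Import Defs.
From HB Require Import structures.
From mathcomp Require Import all_boot all_order all_algebra.
From mathcomp Require Import all_classical all_reals all_analysis.
From mathcomp Require Import lra measurable_realfun.
Import Order.TTheory GRing.Theory Num.Theory.
Import numFieldNormedType.Exports.
Local Open Scope classical_set_scope.
Local Open Scope ring_scope.

Lemma alg_lo (R : realType) (P Q lP lQ lm L u v : R) :
  0 < P -> Q * v <= P -> P <= Q * u -> 0 < v -> v <= u -> lQ <= L -> 0 <= L ->
  lP <= lQ - lm -> 0 <= Q ->
  P * lP <= (Q * lQ) * v + P * (- lm) + Q * ((u - v) * L).
Proof.
move=> P0 h1 h2 v0 vu qL L0 hl Q0.
have e1 : P * lP <= P * (lQ - lm) by rewrite ler_pM2l.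
have e3 : 0 <= Q * ((u - v) * L) by rewrite mulr_ge0 // mulr_ge0 // subr_ge0.
have [lq0|lq0] := leP lQ 0.
  have e2 : 0 <= (P - Q * v) * (- lQ) by rewrite mulr_ge0 // ?subr_ge0 ?oppr_ge0.
  nra.
have e2 : 0 <= (Q * u - P) * lQ by apply: mulr_ge0; lra.
have e4 : 0 <= Q * (u - v) * (L - lQ) by apply: mulr_ge0; [apply: mulr_ge0|]; lra.
nra.
Qed.

Lemma alg_up (R : realType) (P Q lP lQ lM L u v : R) :
  0 < P -> Q * v <= P -> P <= Q * u -> 0 < v -> v <= u -> lQ <= L -> 0 <= L ->
  lQ - lM <= lP -> 0 <= Q ->
  (Q * lQ) * u + P * (- lM) + Q * (- ((u - v) * L)) <= P * lP.
Proof.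
move=> P0 h1 h2 v0 vu qL L0 hl Q0.
have e1 : P * (lQ - lM) <= P * lP by rewrite ler_pM2l.
have e3 : 0 <= Q * ((u - v) * L) by rewrite mulr_ge0 // mulr_ge0 // subr_ge0.
have [lq0|lq0] := leP lQ 0.
  have e2 : 0 <= (Q * u - P) * (- lQ) by rewrite mulr_ge0 // ?subr_ge0 ?oppr_ge0.
  nra.
have e2 : 0 <= (P - Q * v) * lQ by apply: mulr_ge0; lra.
have e4 : 0 <= Q * (u - v) * (L - lQ) by apply: mulr_ge0; [apply: mulr_ge0|]; lra.
nra.
Qed.

Lemma fin_lo (R : realType) (I RF a b kl c : R) :
  RF <= I * a^-1 + 1 * (- b) + 1 * kl -> kl <= c -> (- I) / a + b - c <= - RF.
Proof. move=> h1 h2; rewrite mulNr; lra. Qed.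

Lemma fin_up (R : realType) (I RF a b kl c : R) :
  I * a^-1 + 1 * (- b) + 1 * (- kl) <= RF -> kl <= c -> - RF <= (- I) / a + b + c.
Proof. move=> h1 h2; rewrite mulNr; lra. Qed.

Arguments fin_lo {R I RF a b kl c}.
Arguments fin_up {R I RF a b kl c}.
Arguments alg_lo {R P Q lP lQ lm L u v}.
Arguments alg_up {R P Q lP lQ lM L u v}.



Section Aux.
Context {R : realType}.
Local Notation mu := (@lebesgue_measure R).

Lemma intZr (f : R -> R) (a : R) : mu.-integrable setT (EFin \o f) ->
  mu.-integrable setT (EFin \o (fun x => f x * a)).
Proof.
move=> h; apply: (eq_integrable measurableT _ _ _ (integrableZr measurableT a h)) => x _ /=.
by rewrite EFinM.
Qed.

Lemma intD (f g : R -> R) : mu.-integrable setT (EFin \o f) ->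
  mu.-integrable setT (EFin \o g) ->
  mu.-integrable setT (EFin \o (fun x => f x + g x)).
Proof.
move=> hf hg; apply: (eq_integrable measurableT _ _ _ (integrableD measurableT hf hg)) => x _ /=.
by rewrite EFinD.
Qed.

Lemma comb3 (f g h : R -> R) (a b c : R) :
  mu.-integrable setT (EFin \o f) ->
  mu.-integrable setT (EFin \o g) ->
  mu.-integrable setT (EFin \o h) ->
  mu.-integrable setT (EFin \o (fun x => f x * a + g x * b + h x * c)) /\
  \int[mu]_x (f x * a + g x * b + h x * c) =
   \int[mu]_x f x * a + \int[mu]_x g x * b + \int[mu]_x h x * c.
Proof.
move=> hf hg hh.
have ia := intZr f a hf; have ib := intZr g b hg; have ic := intZr h c hh.
have iab := intD _ _ ia ib.
split; first exact: intD _ _ iab ic.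
rewrite RintegralD // RintegralD // !RintegralZr //.
Qed.

End Aux.

Theorem mainTheorem4 (R : realType) (q : R -> R)
  (hq_dens : is_density q) (hq_su : symmetric_unimodal q)
  (hq_fin : (@lebesgue_measure R).-integrable setT (fun x => (q x * ln (q x))%:E))
  (dmin dmax : R) (hdmin : 0 < dmin) (hdle : dmin <= dmax)
  (d : measure_display) (T : measurableType d) (P : probability T R)
  (X : {RV P >-> R}) (p : R -> R) (hX : has_density X p)
  (hbounds : forall x, q x / dmax <= p x /\ p x <= q x / dmin) :
  let hq := - \int[@lebesgue_measure R]_x (q x * ln (q x)) in
  let c := (dmin^-1 - dmax^-1) * pos_part (q 0 * ln (q 0)) in
  ((hq / dmax + ln dmin - c)%:E <= diff_entropy p)%E /\
  (diff_entropy p <= (hq / dmin + ln dmax + c)%:E)%E.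
Proof.
move=> hq c.
set mu := @lebesgue_measure R.
have [mq [q0 iq1]] := hq_dens.
have [p0 [mp hP]] := hX.
have ip1 : (\int[mu]_x (p x)%:E = 1)%E.
  by rewrite -hP // probability_setT.
have intp : mu.-integrable setT (EFin \o p).
  apply/integrableP; split; first exact/measurable_EFinP.
  under eq_integral => x _ do rewrite /comp abse_EFin ger0_norm//.
  by rewrite ip1 ltry.
have intq : mu.-integrable setT (EFin \o q).
  apply/integrableP; split; first exact/measurable_EFinP.
  under eq_integral => x _ do rewrite /comp abse_EFin ger0_norm//.
  by rewrite iq1 ltry.
have Rp1 : \int[mu]_x p x = 1 by rewrite /Rintegral ip1.
have Rq1 : \int[mu]_x q x = 1 by rewrite /Rintegral iq1.
have intql : mu.-integrable setT (EFin \o (fun x => q x * ln (q x))) by [].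
have dmax0 : 0 < dmax by apply: lt_le_trans hdle.
have v0 : 0 < dmax^-1 by rewrite invr_gt0.
have vu : dmax^-1 <= dmin^-1 by rewrite lef_pV2 ?posrE.
set L := Num.max 0 (ln (q 0)).
have L0 : 0 <= L by rewrite le_max lexx.
have qle : forall x, q x <= q 0.
  have [hs hm] := hq_su.
  move=> x; have [x0|x0] := leP 0 x; first exact: hm.
  rewrite hs; apply: hm => //; rewrite oppr_ge0 ltW //.
set k := dmin^-1 - dmax^-1.
set F := fun x => p x * ln (p x).
set Lo := fun x => q x * ln (q x) * dmax^-1 + p x * (- ln dmin) + q x * (k * L).
set Up := fun x => q x * ln (q x) * dmin^-1 + p x * (- ln dmax) + q x * (- (k * L)).
have pw : forall x, Up x <= F x <= Lo x.
  move=> x; have [hb1 hb2] := hbounds x.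
  rewrite ler_pdivrMr // in hb1; rewrite ler_pdivlMr // in hb2.
  have := p0 x; rewrite le_eqVlt => /predU1P[px0|px0].
    have qx0 : q x = 0.
      by apply/le_anti; rewrite q0 andbT -px0 mul0r in hb1 *.
    by rewrite /Up /F /Lo -px0 qx0 !mul0r !addr0 lexx.
  have qx0 : 0 < q x by apply: lt_le_trans hb2; rewrite mulr_gt0.
  have hv : q x * dmax^-1 <= p x by rewrite ler_pdivrMr.
  have hu : p x <= q x * dmin^-1 by rewrite ler_pdivlMr.
  have lqL : ln (q x) <= L.
    rewrite le_max; apply/orP; right.
    by rewrite ler_ln ?posrE // (lt_le_trans qx0 (qle x)).
  have l1 : ln (p x) <= ln (q x) - ln dmin.
    rewrite lerBrDr -lnM ?posrE // ler_ln ?posrE // mulr_gt0 //.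
  have l2 : ln (q x) - ln dmax <= ln (p x).
    rewrite lerBlDr -lnM ?posrE // ler_ln ?posrE // mulr_gt0 //.
  rewrite /Up /F /Lo /k; apply/andP; split.
    exact: (alg_up px0 hv hu v0 vu lqL L0 l2 (ltW qx0)).
  exact: (alg_lo px0 hv hu v0 vu lqL L0 l1 (ltW qx0)).
have [iLo RLo] := comb3 _ _ _ (dmax^-1) (- ln dmin) (k * L) intql intp intq.
have [iUp RUp] := comb3 _ _ _ (dmin^-1) (- ln dmax) (- (k * L)) intql intp intq.
have mF : measurable_fun setT F.
  by apply: measurable_funM => //; apply: measurableT_comp => //; exact: measurable_ln.
have mUp : measurable_fun setT Up.
  by apply/measurable_EFinP; exact: (measurable_int _ iUp).
have iG : mu.-integrable setT (EFin \o (fun x => F x - Up x)).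
  apply: (le_integrable measurableT _ _ (integrableB measurableT iLo iUp)).
    by apply/measurable_EFinP; exact: measurable_funB.
  move=> x _; rewrite /comp -EFinB !abse_EFin lee_fin -/(F x) -/(Lo x) -/(Up x).
  have /andP[h1 h2] := pw x.
  rewrite !ger0_norm ?subr_ge0 //; last exact: le_trans h2.
  by rewrite lerB.
have iF : mu.-integrable setT (EFin \o F).
  apply: (eq_integrable measurableT _ _ _ (intD _ _ iUp iG)) => x _ /=.
  by rewrite addrC subrK.
have RFlo : \int[mu]_x F x <= \int[mu]_x Lo x.
  by apply: le_Rintegral => // x _; have /andP[] := pw x.
have RFup : \int[mu]_x Up x <= \int[mu]_x F x.
  by apply: le_Rintegral => // x _; have /andP[] := pw x.
have hDE : diff_entropy p = (- \int[mu]_x F x)%:E.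
  rewrite /diff_entropy EFinN /Rintegral fineK //.
  exact: (integrable_fin_num measurableT iF).
have hc : k * L <= c.
  rewrite /c -/k; apply: ler_wpM2l; first by rewrite /k subr_ge0.
  rewrite /pos_part ge_max; apply/andP; split; first by rewrite le_max lexx.
  have [l0|l0] := leP (ln (q 0)) 0; first by rewrite le_max l0.
  have q1 : 1 < q 0.
    by rewrite ltNge; apply/negP => /ln_le0; rewrite leNgt l0.
  rewrite le_max; apply/orP; right.
  have h : 0 <= (q 0 - 1) * ln (q 0) by apply: mulr_ge0; [rewrite subr_ge0 ltW|rewrite ltW].
  by rewrite -subr_ge0; rewrite mulrBl mul1r in h.
rewrite hDE /hq; split; rewrite lee_fin.
  move: RFlo; rewrite /Lo RLo Rp1 Rq1 -/mu => h; exact: fin_lo h hc.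
move: RFup; rewrite /Up RUp Rp1 Rq1 -/mu => h; exact: fin_up h hc.
Qed.
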